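(* Let $(M,\widetilde B)$ be a root of unity quantum seed satisfying condition (Coprime). Then for every $k\in\mathrm{ex}$, $$M(e_k)^\ell\big(\mu_k(M)(e_k)\big)^\ell=\prod_{b_{ik}>0}\big(M(e_i)^\ell\big)^{b_{ik}}+\prod_{b_{ik}<0}\big(M(e_i)^\ell\big)^{-b_{ik}}.$$
   Context: Let $\ell$ be a positive integer, $\mathbb Z_\ell=\mathbb Z/\ell\mathbb Z$, $\varepsilon^{1/2}\in\mathbb C$ a primitive $\ell$-th root of unity, $\mathcal A^{1/2}_\varepsilon=\mathbb Z[\varepsilon^{1/2}]$, $\varepsilon^{a/2}=(\varepsilon^{1/2})^a$ for $a\in\mathbb Z_\ell$; $\overline C$ is the reduction mod $\ell$ of an integer matrix $C$; $e_1,\dots,e_N$ is the standard basis of $\mathbb Z^N$. For a skew-symmetric bilinear form $\Lambda:\mathbb Z^N\times\mathbb Z^N\to\mathbb Z_\ell$ with matrix $(\lambda_{ij})$, $\mathcal T_\varepsilon(\Lambda)$ is the $\mathcal A^{1/2}_\varepsilon$-algebra with basis $\{X^f\}_{f\in\mathbb Z^N}$ and $X^fX^g=\varepsilon^{\Lambda(f,g)/2}X^{f+g}$. A root of unity toric frame of a division algebra $\mathcal F$ over $\mathbb Q(\varepsilon^{1/2})$ is a map $M:\mathbb Z^N\to\mathcal F$ such that for some (unique) skew-symmetric $\Lambda=:\Lambda_M$ there is an injective $\mathcal A^{1/2}_\varepsilon$-algebra map $\phi:\mathcal T_\varepsilon(\Lambda)\to\mathcal F$, $\phi(X^f)=M(f)$,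 with $\mathcal F$ the skew field of fractions of its image. Fix $\mathrm{ex}\subseteq[1,N]$. An exchange matrix $\widetilde B=(b_{ij})$ is an integer matrix with rows indexed by $[1,N]$, columns by $\mathrm{ex}$, principal part $B$, $k$-th column $b^k\in\mathbb Z^N$. $(\Lambda,\widetilde B)$ is $\ell$-compatible if there is $D=\mathrm{diag}(d_j)_{j\in\mathrm{ex}}$, $d_j\in\mathbb Z_{>0}$, with $DB$ skew-symmetric and $\sum_k\overline b_{kj}\lambda_{ki}=\delta_{ij}\overline d_j$ in $\mathbb Z_\ell$ for all $i\in[1,N]$, $j\in\mathrm{ex}$. A root of unity quantum seed is $(M,\widetilde B)$ with $(\Lambda_M,\widetilde B)$ $\ell$-compatible. Condition (Coprime): $\ell$ is odd and coprime to all $d_k$, $k\in\mathrm{ex}$. For $b\in\mathbb Z^N$, $[b]_\pm$ keeps the entries $b_i$ with $\pm b_i\ge0$ and sets the others to $0$. The mutated frame satisfies $\mu_k(M)(e_k)=M(-e_k+[b^k]_+)+M(-e_k-[b^k]_-)$. *)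

(* Defs.v *)
From HB Require Import structures.
From mathcomp Require Import all_boot all_order all_algebra all_field.
Set Implicit Arguments. Unset Strict Implicit. Unset Printing Implicit Defensive.
Import Order.TTheory GRing.Theory Num.Theory.
Local Open Scope ring_scope.

(* Vectors of Z^N are integer row vectors 'rV[int]_N; indices [1,N] are 'I_N. *)

Definition evec (N : nat) (i : 'I_N) : 'rV[int]_N := delta_mx 0 i.

Definition pos_part (N : nat) (b : 'rV[int]_N) : 'rV[int]_N :=
  \row_i (if 0 <= b 0 i then b 0 i else 0).
Definition neg_part (N : nat) (b : 'rV[int]_N) : 'rV[int]_N :=
  \row_i (if b 0 i <= 0 then b 0 i else 0).

(* k-th column b^k of an exchange matrix (rows [1,N]; only columns in ex are used) *)
Definition bcol (N : nat) (B : 'M[int]_N) (k : 'I_N) : 'rV[int]_N := \row_i B i k.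

(* Bilinear form with (integer representatives of the) matrix lam:
   Lambda(f,g) = sum_{i,j} f_i lam_ij g_j, read modulo l. *)
Definition formL (N : nat) (lam : 'M[int]_N) (f g : 'rV[int]_N) : int :=
  (f *m lam *m g^T) 0 0.

Definition skew_mod (l N : nat) (lam : 'M[int]_N) : Prop :=
  forall i j, (l%:Z %| lam i j + lam j i)%Z.

(* a lies in (the image of) A^{1/2}_eps = Z[q] *)
Definition in_Aq (K : fieldType) (q : K) (a : K) : Prop :=
  exists p : {poly int}, a = (map_poly (fun z : int => z%:~R) p).[q].

(* Root of unity toric frame M of the division algebra F with form lam:
   the Z[q]-linear map phi : T_eps(Lambda) -> F, X^f |-> M f, is a unital
   algebra map (M 0 = 1 and M f M g = q^{Lambda(f,g)} M (f+g)), it is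
   injective ({M f} linearly independent over Z[q]), and F is the skew field
   of fractions of its image (the only division subring of F containing the
   image of phi is F itself). *)
Definition toric_frame (K : fieldType) (F : unitAlgType K) (q : K) (l N : nat)
  (M : 'rV[int]_N -> F) (lam : 'M[int]_N) : Prop :=
  [/\ skew_mod l lam,
      M 0 = 1,
      (forall f g, M f * M g = (q ^ formL lam f g) *: M (f + g)),
      (forall (s : seq 'rV[int]_N) (c : 'rV[int]_N -> K),
          uniq s -> (forall f, in_Aq q (c f)) ->
          \sum_(f <- s) c f *: M f = 0 -> forall f, f \in s -> c f = 0) &
      (forall S : F -> Prop,
          S 0 -> S 1 ->
          (forall x y, S x -> S y -> S (x + y)) ->
          (forall x, S x -> S (- x)) ->
          (forall x y, S x -> S y -> S (x * y)) ->
          (forall x, S x -> x != 0 -> S x^-1) ->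
          (forall a, in_Aq q a -> S (a *: 1)) ->
          (forall f, S (M f)) ->
          forall x, S x)].

(* (lam, B) is l-compatible, witnessed by D = diag(d_j)_{j in ex} *)
Definition compatible_with (l N : nat) (ex : {set 'I_N}) (lam B : 'M[int]_N)
  (d : 'I_N -> nat) : Prop :=
  [/\ (forall j, j \in ex -> (0 < d j)%N),
      (forall i j, i \in ex -> j \in ex ->
          (d i)%:Z * B i j = - ((d j)%:Z * B j i)) &
      (forall i j, j \in ex ->
          (l%:Z %| \sum_(k < N) B k j * lam k i - (i == j)%:R * (d j)%:Z)%Z)].

Definition coprime_cond (l N : nat) (ex : {set 'I_N}) (d : 'I_N -> nat) : Prop :=
  odd l /\ (forall k, k \in ex -> coprime l (d k)).

Definition mut_ek (K : fieldType) (F : unitAlgType K) (N : nat)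
  (M : 'rV[int]_N -> F) (B : 'M[int]_N) (k : 'I_N) : F :=
  M (- evec k + pos_part (bcol B k)) + M (- evec k - neg_part (bcol B k)).

(* Main.v *)
Require Import Defs.
From HB Require Import structures.
From mathcomp Require Import all_boot all_order all_algebra all_field.
From mathcomp Require Import ring.
Import Order.TTheory GRing.Theory Num.Theory.
Local Open Scope ring_scope.
Set Implicit Arguments. Unset Strict Implicit.

Lemma comm_lin (K : fieldType) (F : algType K) (Z : F) (a b : K) :
  GRing.comm (1 + a *: Z) (1 + b *: Z).
Proof.
rewrite /GRing.comm !mulrDl !mulrDr !mul1r !mulr1 -!scalerAl -!scalerAr !scalerA mulrC.
by rewrite !addrA (addrAC 1 (a *: Z)).
Qed.

Lemma powA (K : fieldType) (F : algType K) (A Z : F) (w : K) :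
  Z * A = w *: (A * Z) ->
  forall n, (A + A * Z) ^+ n = A ^+ n * \prod_(i < n) (1 + w ^+ i *: Z).
Proof.
move=> hZA.
have h1 n : Z * A ^+ n = w ^+ n *: (A ^+ n * Z).
  elim: n => [|n IH]; first by rewrite !expr0 mulr1 mul1r scale1r.
  rewrite !exprSr mulrA IH -scalerAl -[A ^+ n * Z * A]mulrA hZA -scalerAr scalerA.
  by rewrite mulrA.
have h2 n : (1 + Z) * A ^+ n = A ^+ n * (1 + w ^+ n *: Z).
  by rewrite mulrDl mul1r h1 mulrDr mulr1 scalerAr.
elim => [|n IH]; first by rewrite !expr0 big_ord0 mulr1.
rewrite exprS IH -{1}(mulr1 A) -mulrDr -mulrA (mulrA (1 + Z)) h2.
rewrite big_ord_recr /= -!mulrA exprS -!mulrA; congr (_ * (_ * _)).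
apply: commr_prod => i _; exact: comm_lin.
Qed.

Lemma prodZ (K : fieldType) (F : algType K) (Z : F) (w : K) (l : nat) :
  l.-primitive_root w -> odd l ->
  \prod_(i < l) (1 + w ^+ i *: Z) = 1 + Z ^+ l.
Proof.
move=> pw ol.
have l0 : (0 < l)%N := prim_order_gt0 pw.
have wl : w ^+ l = 1 := prim_expr_order pw.
set z := w ^+ l.-1.
have pz : l.-primitive_root z.
  rewrite /z prim_root_exp_coprime //; rewrite -{2}(prednK l0).
  exact: coprimenS.
have wz i : w ^+ i * z ^+ i = 1.
  by rewrite -exprMn -exprS prednK // wl expr1n.
have -> : \prod_(i < l) (1 + w ^+ i *: Z) = \prod_(i < l) (w ^+ i *: (z ^+ i)%:A + w ^+ i *: Z).
  by apply: eq_bigr => i _; rewrite scalerA wz scale1r.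
rewrite (eq_bigr (fun i : 'I_l => w ^+ i *: ((z ^+ i)%:A + Z))); last by move=> i _; rewrite scalerDr.
rewrite scaler_prod prodrXr.
have -> : (\sum_(i < l) (i : nat))%N = 'C(l, 2) by rewrite -bin2_sum big_mkord.
rewrite bin2odd // exprM wl expr1n scale1r.
have hb (c : K) : horner_alg (- Z) ('X - c%:P) = - Z - c%:A.
  by rewrite rmorphB /= horner_algX horner_algC.
have := congr1 (horner_alg (- Z)) (factor_Xn_sub_1 pz).
rewrite rmorph_prod rmorphB rmorphXn rmorph1 /= horner_algX big_mkord.
rewrite (eq_bigr (fun i : 'I_l => - ((z ^+ i)%:A + Z))); last first.
  by move=> i _; rewrite [RHS]opprD [RHS]addrC; apply: hb.
have m1 : (-1) ^+ l = -1 :> F by rewrite -signr_odd ol expr1.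
move=> h; rewrite prodrN cardT size_enum_ord m1 exprNn m1 !mulN1r in h.
by rewrite -[LHS]opprK h opprB opprK addrC.
Qed.

Lemma q_neq0 (K : fieldType) (q : K) (l : nat) : l.-primitive_root q -> q != 0.
Proof.
move=> pq; apply/eqP => q0; move: (prim_expr_order pq).
by rewrite q0 expr0n gtn_eqF ?(prim_order_gt0 pq) // => /eqP; rewrite eq_sym oner_eq0.
Qed.

Lemma qdiv (K : fieldType) (q : K) (l : nat) (z : int) :
  l.-primitive_root q -> (l%:Z %| z)%Z -> q ^ z = 1.
Proof.
move=> pq /dvdzP [m ->]; rewrite mulrC -exprz_exp.
by rewrite -exprnP prim_expr_order // exp1rz.
Qed.

Lemma qcong (K : fieldType) (q : K) (l : nat) (a b : int) :
  l.-primitive_root q -> (l%:Z %| a - b)%Z -> q ^ a = q ^ b.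
Proof.
move=> pq h; rewrite -(subrK b a) expfzDr ?(q_neq0 pq) //.
by rewrite (qdiv pq h) mul1r.
Qed.

Lemma formLE (N : nat) (lam : 'M[int]_N) f g :
  formL lam f g = \sum_j (\sum_i f 0 i * lam i j) * g 0 j.
Proof. by rewrite /formL mxE; apply: eq_bigr => j _; rewrite !mxE. Qed.

Lemma formLE2 (N : nat) (lam : 'M[int]_N) f g :
  formL lam f g = \sum_i \sum_j f 0 i * lam i j * g 0 j.
Proof.
rewrite formLE exchange_big; apply: eq_bigr => i _.
by rewrite big_distrl.
Qed.

Lemma formL_Zl (N : nat) (lam : 'M[int]_N) (a : int) f g :
  formL lam (a *: f) g = a * formL lam f g.
Proof. by rewrite /formL -!scalemxAl mxE. Qed.

Lemma formL_Zr (N : nat) (lam : 'M[int]_N) (a : int) f g :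
  formL lam f (a *: g) = a * formL lam f g.
Proof. by rewrite /formL linearZ /= -scalemxAr mxE. Qed.

Lemma formL_Nl (N : nat) (lam : 'M[int]_N) f g :
  formL lam (- f) g = - formL lam f g.
Proof. by rewrite -scaleN1r formL_Zl mulN1r. Qed.

Lemma formL_Nr (N : nat) (lam : 'M[int]_N) f g :
  formL lam f (- g) = - formL lam f g.
Proof. by rewrite -scaleN1r formL_Zr mulN1r. Qed.

Lemma formL_skew (l N : nat) (lam : 'M[int]_N) f g :
  skew_mod l lam -> (l%:Z %| formL lam f g + formL lam g f)%Z.
Proof.
move=> sk; rewrite !formLE2 [X in _ + X]exchange_big -big_split.
apply: rpred_sum => i _; rewrite -big_split; apply: rpred_sum => j _ /=.
have -> : f 0 i * lam i j * g 0 j + g 0 j * lam j i * f 0 i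
   = f 0 i * g 0 j * (lam i j + lam j i) by ring.
exact: dvdz_mull.
Qed.

Lemma formL_diag (l N : nat) (lam : 'M[int]_N) f :
  odd l -> skew_mod l lam -> (l%:Z %| formL lam f f)%Z.
Proof.
move=> ol sk; have := formL_skew f f sk.
have -> : formL lam f f + formL lam f f = formL lam f f * 2 by ring.
by rewrite Gauss_dvdzl // coprimezE /= coprimen2.
Qed.

Lemma formL_compat (l N : nat) (lam B : 'M[int]_N) (k : 'I_N) (d : nat) x :
  (forall i, (l%:Z %| \sum_(m < N) B m k * lam m i - (i == k)%:R * d%:Z)%Z) ->
  (l%:Z %| formL lam (bcol B k) x - d%:Z * x 0%R k)%Z.
Proof.
move=> hc; rewrite formLE.
have -> : d%:Z * x 0 k = \sum_j (j == k)%:R * d%:Z * x 0 j.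
  rewrite (bigD1 k) //= eqxx mul1r big1 ?addr0 // => j /negbTE ->.
  by rewrite !mul0r.
rewrite -sumrB; apply: rpred_sum => j _; rewrite -mulrBl; apply: dvdz_mulr.
by under eq_bigr => i _ do rewrite mxE.
Qed.

Lemma Mmul1 (K : fieldType) (F : algType K) (q : K) (l N : nat)
  (M : 'rV[int]_N -> F) (lam : 'M[int]_N) :
  l.-primitive_root q ->
  (forall f g, M f * M g = (q ^ formL lam f g) *: M (f + g)) ->
  forall f g, (l%:Z %| formL lam f g)%Z -> M f * M g = M (f + g).
Proof. by move=> pq Mm f g h; rewrite Mm (qdiv pq h) scale1r. Qed.

Lemma Mpow (K : fieldType) (F : algType K) (q : K) (l N : nat)
  (M : 'rV[int]_N -> F) (lam : 'M[int]_N) :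
  l.-primitive_root q -> odd l -> skew_mod l lam -> M 0 = 1 ->
  (forall f g, M f * M g = (q ^ formL lam f g) *: M (f + g)) ->
  forall f n, M f ^+ n = M (n%:Z *: f).
Proof.
move=> pq ol sk M0 Mm f; elim => [|n IH]; first by rewrite expr0 scale0r M0.
rewrite exprSr IH (Mmul1 pq Mm); last first.
  by rewrite formL_Zl; apply: dvdz_mull; apply: formL_diag.
rewrite -{2}(scale1r f) -scalerDl; congr (M (_ *: _)).
by rewrite -[in RHS]addn1 PoszD.
Qed.

Lemma Mll (K : fieldType) (F : algType K) (q : K) (l N : nat)
  (M : 'rV[int]_N -> F) (lam : 'M[int]_N) :
  l.-primitive_root q ->
  (forall f g, M f * M g = (q ^ formL lam f g) *: M (f + g)) ->
  forall f g, M (l%:Z *: f) * M (l%:Z *: g) = M (l%:Z *: (f + g)).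
Proof.
move=> pq Mm f g; rewrite (Mmul1 pq Mm) ?scalerDr //.
by rewrite formL_Zl formL_Zr; apply: dvdz_mulr; apply: dvdzz.
Qed.

Lemma Mprod (K : fieldType) (F : algType K) (q : K) (l N : nat)
  (M : 'rV[int]_N -> F) (lam : 'M[int]_N) (P : pred 'I_N) (h : 'I_N -> 'rV[int]_N) :
  l.-primitive_root q -> M 0 = 1 ->
  (forall f g, M f * M g = (q ^ formL lam f g) *: M (f + g)) ->
  \prod_(i < N | P i) M (l%:Z *: h i) = M (l%:Z *: \sum_(i < N | P i) h i).
Proof.
move=> pq M0 Mm.
apply: (big_rec2 (fun y1 y2 => y1 = M (l%:Z *: y2))); first by rewrite scaler0 M0.
by move=> i y1 y2 _ ->; rewrite (Mll pq Mm).
Qed.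

Lemma sum_pos (N : nat) (B : 'M[int]_N) (k : 'I_N) :
  \sum_(i < N | 0 < B i k) (`|B i k|%N)%:Z *: evec i = pos_part (bcol B k).
Proof.
apply/rowP => j; rewrite summxE !mxE big_mkcond (bigD1 j) //= big1 ?addr0.
  rewrite !mxE /=.
  case: (ltrgtP (B j k) 0) => h.
  - by [].
  - by rewrite eqxx mulr1 abszE gtr0_norm.
  - by rewrite h.
move=> i /negbTE hij; case: ifP => _ //; rewrite !mxE.
by rewrite eq_sym hij andbF mulr0.
Qed.

Lemma sum_neg (N : nat) (B : 'M[int]_N) (k : 'I_N) :
  \sum_(i < N | B i k < 0) (`|B i k|%N)%:Z *: evec i = - neg_part (bcol B k).
Proof.
apply/rowP => j; rewrite summxE !mxE big_mkcond (bigD1 j) //= big1 ?addr0.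
  rewrite !mxE /=.
  case: (ltrgtP (B j k) 0) => h.
  - by rewrite eqxx mulr1 abszE ltr0_norm.
  - by rewrite oppr0.
  - by rewrite h oppr0.
move=> i /negbTE hij; case: ifP => _ //; rewrite !mxE.
by rewrite eq_sym hij andbF mulr0.
Qed.

Lemma pos_neg (N : nat) (b : 'rV[int]_N) : pos_part b + neg_part b = b.
Proof.
apply/rowP => j; rewrite !mxE.
by case: (ltrgtP (b 0 j) 0) => h; rewrite ?addr0 ?add0r ?h.
Qed.

Unset Implicit Arguments.

Theorem proposition4p4
  (l : nat) (e : algC) (K : fieldType) (sigma : {rmorphism K -> algC}) (q : K)
  (F : unitAlgType K) (N : nat) (ex : {set 'I_N})
  (M : 'rV[int]_N -> F) (lam B : 'M[int]_N) (d : 'I_N -> nat) :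
  (0 < l)%N ->
  l.-primitive_root e ->
  sigma q = e ->
  (forall x : K, exists p : {poly rat}, x = (map_poly ratr p).[q]) ->
  (forall x : F, x != 0 -> x \is a GRing.unit) ->
  toric_frame q l M lam ->
  compatible_with l ex lam B d ->
  coprime_cond l ex d ->
  forall k, k \in ex ->
    M (evec k) ^+ l * (mut_ek M B k) ^+ l =
      \prod_(i < N | 0 < B i k) (M (evec i) ^+ l) ^+ `|B i k|%N
    + \prod_(i < N | B i k < 0) (M (evec i) ^+ l) ^+ `|B i k|%N.
Proof.
move=> l0 pe sq _ _ [sk M0 Mm _ _] [dpos dB dc] [ol cop] k kex.
have pq : l.-primitive_root q by rewrite -(fmorph_primitive_root sigma) sq.
have q0 := q_neq0 pq.
have bkk : B k k = 0.
  have := dB k k kex kex; move/eqP; rewrite -addr_eq0 -mulr2n mulrn_eq0 /=.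
  rewrite mulf_eq0 => /orP [| /eqP //]; rewrite eqz_nat => /eqP h.
  by move: (dpos k kex); rewrite h.
set b := bcol B k.
set ek := evec k.
set f1 := - ek + pos_part b.
set g := - b.
set c1 := formL lam f1 g.
set Z := q ^ (- c1) *: M g.
set w := q ^ (formL lam g f1 - c1).
have posk : (pos_part b) 0 k = 0 by rewrite /pos_part /b !mxE bkk lexx.
have f1k : f1 0 k = -1.
  by rewrite /f1 /ek /evec !mxE bkk lexx !eqxx /= addr0.
have hf1g : f1 + g = - ek - neg_part b.
  by rewrite /f1 /g -[in X in _ - X](pos_neg b) opprD addrA addrK.
have hY2 : M (- ek - neg_part b) = M f1 * Z.
  rewrite /Z -scalerAr Mm scalerA -expfzDr // addNr expr0z scale1r.
  by rewrite hf1g.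
have hZY : Z * M f1 = w *: (M f1 * Z).
  rewrite /Z -scalerAl -scalerAr !Mm !scalerA [g + f1]addrC.
  congr (_ *: _); rewrite /w -!expfzDr //; congr (_ ^ _); rewrite /c1; ring.
have pw : l.-primitive_root w.
  rewrite /w (@qcong _ _ _ _ (2 * d k)%N%:Z pq); last first.
    have hs := formL_skew b f1 sk.
    have ht := formL_compat f1 (fun i => dc i k kex).
    rewrite f1k in ht.
    rewrite /c1 /g formL_Nl formL_Nr.
    have -> : - formL lam b f1 - - formL lam f1 b - (2 * d k)%N%:Z
      = (formL lam b f1 + formL lam f1 b) - (formL lam b f1 - (d k)%:Z * -1) * 2.
      by rewrite PoszM; ring.
    by apply: rpredB => //; apply: dvdz_mulr.
  by rewrite -exprnP prim_root_exp_coprime // coprimeMl coprime2n ol coprime_sym cop.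
have hS : mut_ek M B k = M f1 + M f1 * Z by rewrite /mut_ek hY2.
rewrite hS (powA hZY) (prodZ _ pw ol).
have hZl : Z ^+ l = M (l%:Z *: g).
  have hq : (q ^ (- c1)) ^+ l = 1.
    by rewrite exprnP exprz_exp (qdiv pq) // dvdz_mull // dvdzz.
  by rewrite /Z exprZn hq scale1r (Mpow pq ol sk M0 Mm).
rewrite hZl !(Mpow pq ol sk M0 Mm) mulrDr mulr1 mulrDr mulrA (Mll pq Mm).
rewrite (Mll pq Mm).
rewrite (eq_bigr (fun i => M (l%:Z *: ((`|B i k|%N)%:Z *: evec i)))); last first.
  by move=> i _; rewrite !(Mpow pq ol sk M0 Mm) !scalerA mulrC.
rewrite (eq_bigr (fun i => M (l%:Z *: ((`|B i k|%N)%:Z *: evec i)))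
   (P := fun i => B i k < 0)); last first.
  by move=> i _; rewrite !(Mpow pq ol sk M0 Mm) !scalerA mulrC.
rewrite (Mprod _ _ pq M0 Mm) (Mprod _ _ pq M0 Mm) sum_pos sum_neg.
have e1 : ek + f1 = pos_part b by rewrite /f1 addrA subrr add0r.
rewrite e1; congr (_ + M (_ *: _)).
by rewrite /g -[in X in _ - X](pos_neg b) opprD addrA subrr add0r.
Qed.
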